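(* Let $a\in\mathbb{N}$ and $b,d\in\mathbb{Z}$. Suppose there is a prime $p$ with $v_p(a)>\max\{v_p(b),v_p(d)\}$ and $v_p(b)=v_p(d)$. Then there exists a completely multiplicative function $f:\mathbb{N}\to\mathbb{S}^1$ such that $$\liminf_{n\to\infty}|f(an+b)-f(an+d)|>0.$$
   Context: $\mathbb{N}=\{1,2,\dots\}$, $\mathbb{S}^1$ the unit circle; completely multiplicative means $f(mn)=f(m)f(n)$. $v_p$ is the $p$-adic valuation. The expression is considered for $n$ large enough that $an+b,an+d\ge1$. *)

(* Defs.v *)
From HB Require Import structures.
From mathcomp Require Import all_boot all_order all_algebra.
From mathcomp Require Import all_classical all_reals all_analysis.
From mathcomp Require Export complex.
Set Implicit Arguments. Unset Strict Implicit. Unset Printing Implicit Defensive.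
Import Order.TTheory GRing.Theory Num.Theory.

Definition unimodular_cm (R : realType) (f : nat -> R[i]) : Prop :=
  (forall n : nat, (0 < n)%N -> Normc.normc (f n) = 1%R) /\
  (forall m n : nat, (0 < m)%N -> (0 < n)%N -> f (m * n)%N = (f m * f n)%R).

(* f evaluated at an integer argument z (meaningful for z >= 1, which holds
   eventually for the arguments a n + b, a n + d used below). *)
Definition fZ (R : realType) (f : nat -> R[i]) (z : int) : R[i] := f `|z|%N.

(* Main.v *)
Require Import Defs.
From HB Require Import structures.
From mathcomp Require Import all_boot all_order all_algebra.
From mathcomp Require Import all_classical all_reals all_analysis.
From mathcomp Require Import complex.
From mathcomp Require Import all_fingroup all_solvable.
From mathcomp Require Import separable cyclotomic.
From mathcomp.algebra_tactics Require Import ring.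
From mathcomp Require Import zify.
Import Order.TTheory GRing.Theory Num.Theory.
Set Implicit Arguments. Unset Strict Implicit. Unset Printing Implicit Defensive.

Lemma Zp_nat_eq p (m n : nat) : (1 < p)%N ->
  ((m%:R : 'Z_p) = n%:R)%R <-> m = n %[mod p].
Proof.
move=> p1; split.
  by move/(congr1 (@nat_of_ord _)); rewrite !val_Zp_nat.
by move=> h; apply: ord_inj; rewrite !val_Zp_nat.
Qed.

Lemma prim_root_nat p : prime p -> exists g : nat, coprime p g /\
  (forall u, coprime p u -> exists j, g ^ j = u %[mod p]) /\
  (forall i j, (g ^ i == g ^ j %[mod p]) = (i == j %[mod p.-1])).
Proof.
move=> pp; have p1 : (1 < p)%N := prime_gt1 pp.
have /cyclicP [G hG] := units_Zp_cyclic pp.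
have oG : #[G]%g = p.-1.
  by rewrite /order -hG card_units_Zp ?totient_prime // prime_gt0.
pose g : nat := val (FinRing.uval G).
have gj : forall j, ((g ^ j)%:R : 'Z_p)%R = FinRing.uval (G ^+ j)%g.
  by move=> j; rewrite FinRing.val_unitX natrX natr_Zp.
exists g; split; last split.
- have := valP G; rewrite /= -[X in X \is a _](natr_Zp) unitZpE //.
- move=> u cu.
  have Uu : ((u%:R : 'Z_p) \is a GRing.unit)%R by rewrite unitZpE.
  have : FinRing.unit _ Uu \in <[G]>%g by rewrite -hG inE.
  case/cycleP=> j hj; exists j; apply/(Zp_nat_eq _ _ p1).
  by rewrite gj -hj.
- move=> i j; rewrite -oG -eq_expg_mod_order.
  apply/idP/idP => [/eqP/(Zp_nat_eq _ _ p1)|/eqP h].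
    by rewrite !gj => h; apply/eqP/val_inj.
  by apply/eqP/(Zp_nat_eq _ _ p1); rewrite !gj h.
Qed.

Definition phi_spec (p N : nat) (c : int) (phi : nat -> nat) :=
  (0 < N)%N /\
  (forall u v, (0 < u)%N -> (0 < v)%N -> coprime p u -> coprime p v ->
     phi (u * v)%N = phi u + phi v %[mod N]) /\
  (forall x y : nat, (0 < x)%N -> (0 < y)%N -> coprime p x -> coprime p y ->
     (y%:Z - x%:Z)%R = c -> phi x != phi y %[mod N]).

Lemma phi_case1 p (c : int) : prime p -> ~~ (p%:Z %| c)%Z ->
  exists N phi, phi_spec p N c phi.
Proof.
move=> pp npc; have [g [cg [hg heq]]] := prim_root_nat pp.
have H : forall u, exists j, coprime p u -> g ^ j = u %[mod p].
  by move=> u; have [cu|ncu] := boolP (coprime p u); [have [j hj] := hg u cu; exists j | exists 0].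
case: (choice H) => phi hphi.
exists p.-1, phi; split; first by rewrite -ltnS prednK ?prime_gt0 // prime_gt1.
split.
- move=> u v u0 v0 cu cv; apply/eqP; rewrite -heq expnD.
  rewrite hphi ?coprimeMr ?cu ?cv // -modnMm -(hphi u cu) -(hphi v cv) modnMm //.
- move=> x y x0 y0 cx cy hc; rewrite -heq (hphi x cx) (hphi y cy).
  apply/negP => /eqP hxy; apply: (negP npc).
  have : (x%:Z %% p%:Z)%Z = (y%:Z %% p%:Z)%Z by rewrite !modz_nat hxy.
  move/eqP; rewrite eqz_mod_dvd => hd.
  by rewrite -hc -opprB rpredN.
Qed.

Lemma binom2 (R : comRingType) (x h : R) n :
  exists q, ((x + h) ^+ n.+1 = x ^+ n.+1 + n.+1%:R * x ^+ n * h + h ^+ 2 * q)%R.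
Proof.
elim: n => [|n [q hq]]; first by exists 0%R; rewrite !expr1 expr0 mulr1 mul1r mulr0 addr0.
exists (x * q + n.+1%:R * x ^+ n + h * q)%R.
rewrite exprS hq !exprS -[n.+2]addn1 -[n.+1]addn1 !natrD. ring.
Qed.

Lemma PoszX (m n : nat) : Posz (m ^ n) = ((Posz m) ^+ n)%R.
Proof. by rewrite -natz natrX natz. Qed.

Lemma phi_case2 p (c : int) : prime p -> c != 0%R -> ((Posz p) %| c)%Z ->
  exists N phi, phi_spec p N c phi.
Proof.
move=> pp c0 pc.
have p1 : (1 < p)%N := prime_gt1 pp.
have c0' : (0 < `|c|)%N by rewrite absz_gt0.
set e := logn p `|c|.
have e1 : (0 < e)%N.
  by rewrite -(pfactor_dvdn 1 pp c0') expn1; move: pc; rewrite dvdzE absz_nat.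
set N := p ^ e.
have N1 : (1 < N)%N by rewrite (leq_trans p1) // -{1}(expn1 p) leq_pexp2l // ltnW.
set M := totient N.
have hM : M = (p.-1 * p ^ e.-1)%N by rewrite /M totient_pfactor.
have M0 : (0 < M)%N by rewrite totient_gt0 ltnW.
pose phi u := u ^ M %/ N.
have hdec : forall u, coprime p u -> u ^ M = (phi u * N + 1)%N.
  move=> u cu; rewrite {1}(divn_eq (u ^ M) N); congr (_ + _)%N.
  rewrite Euler_exp_totient ?modn_small //.
  by rewrite coprime_sym coprimeXl.
exists N, phi; split; first exact: ltnW.
split.
- move=> u v u0 v0 cu cv.
  have -> : phi (u * v)%N = (phi u * phi v * N + (phi u + phi v))%N.
    rewrite /phi expnMn -/(phi u) -/(phi v).
    rewrite [u ^ M]hdec // [v ^ M]hdec //.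
    have -> : ((phi u * N + 1) * (phi v * N + 1) = (phi u * phi v * N + (phi u + phi v)) * N + 1)%N.
      by ring.
    by rewrite divnMDl ?(ltnW N1) // divn_small // addn0.
  by rewrite modnMDl.
- move=> x y x0 y0 cx cy hc; apply/negP => /eqP hxy.
  have [c' hc'] : exists c', c = (c' * (Posz N))%R.
    apply/dvdzP; rewrite dvdzE absz_nat; exact: pfactor_dvdnn.
  have npc' : ~~ (p %| `|c'|)%N.
    apply/negP => hp.
    have : (p ^ e.+1 %| `|c|)%N.
      by rewrite hc' abszM absz_nat expnS; exact: dvdn_mul hp (dvdnn _).
    by rewrite pfactor_dvdn // ltnn.
  have [r hr] : exists r, ((Posz (phi y)) - (Posz (phi x)) = r * (Posz N))%R.
    by apply/dvdzP; rewrite -eqz_mod_dvd !modz_nat hxy.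
  have [M' hM'] : exists M', M = M'.+1 by exists M.-1; rewrite prednK.
  have [q hq] := binom2 ((Posz x)) (c' * (Posz N))%R M'.
  have hY : (((Posz y)) ^+ M = (Posz (phi y)) * (Posz N) + 1)%R by rewrite -PoszX hdec.
  have hX : (((Posz x)) ^+ M = (Posz (phi x)) * (Posz N) + 1)%R by rewrite -PoszX hdec.
  have hyx : (Posz y) = ((Posz x) + c' * (Posz N))%R by rewrite -hc' -hc; ring.
  have E6 : ((r * (Posz N)) * (Posz N) = (Posz M) * (Posz x) ^+ M' * (c' * (Posz N)) + (c' * (Posz N)) ^+ 2 * q)%R.
    rewrite -hr.
    have -> : (((Posz (phi y)) - (Posz (phi x))) * (Posz N) = (Posz y) ^+ M - (Posz x) ^+ M)%R.
      by rewrite hY hX; ring.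
    by rewrite hyx hM' hq -natz; ring.
  have hNe : (Posz N) = ((Posz p) ^+ e.-1 * (Posz p))%R.
    by rewrite -exprSr prednK // -PoszX.
  have hMe : (Posz M) = ((Posz p.-1) * (Posz p) ^+ e.-1)%R.
    by rewrite hM PoszM PoszX.
  have N0 : (Posz N) != 0%R by rewrite -lt0n ltnW.
  have E7 : ((r * (Posz N) - (Posz M) * (Posz x) ^+ M' * c' - c' ^+ 2 * (Posz N) * q) * (Posz N) = 0)%R.
    transitivity ((r * (Posz N)) * (Posz N) - ((Posz M) * (Posz x) ^+ M' * (c' * (Posz N)) + (c' * (Posz N)) ^+ 2 * q))%R; first by ring.
    by rewrite E6 subrr.
  have E8 : (r * (Posz N) - (Posz M) * (Posz x) ^+ M' * c' - c' ^+ 2 * (Posz N) * q = 0)%R.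
    by move/eqP: E7; rewrite mulf_eq0 (negbTE N0) orbF => /eqP.
  have Pe0 : ((Posz p) ^+ e.-1 != 0)%R by rewrite expf_neq0 // -lt0n prime_gt0.
  have key : ((Posz p.-1) * (Posz x) ^+ M' * c' = (Posz p) * (r - c' ^+ 2 * q))%R.
    apply: (mulIf Pe0); apply/eqP; rewrite -subr_eq0.
    have -> : ((Posz p.-1) * (Posz x) ^+ M' * c' * (Posz p) ^+ e.-1 - (Posz p) * (r - c' ^+ 2 * q) * (Posz p) ^+ e.-1 = - (r * (Posz N) - (Posz M) * (Posz x) ^+ M' * c' - c' ^+ 2 * (Posz N) * q))%R.
      by rewrite hNe hMe; ring.
    by rewrite E8 oppr0.
  have : ((Posz p) %| ((Posz p.-1) * (Posz x) ^+ M' * c')%R)%Z.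
    by apply/dvdzP; exists (r - c' ^+ 2 * q)%R; rewrite key mulrC.
  rewrite dvdzE absz_nat !abszM -PoszX !absz_nat !Euclid_dvdM // Euclid_dvdX //.
  case/orP => [/orP [hp1 | /andP [hpx _]] | hpc].
  - have p10 : (0 < p.-1)%N by rewrite -ltnS prednK ?prime_gt0.
    by have := dvdn_leq p10 hp1; lia.
  - by move: cx; rewrite prime_coprime // hpx.
  - by move: npc'; rewrite hpc.
Qed.

Section Cplx.
Local Open Scope ring_scope. Local Open Scope complex_scope.
Lemma fin_min (R : realDomainType) (g : nat -> R) K :
  (forall m, (0 < m < K)%N -> 0 < g m) ->
  exists2 δ, 0 < δ & forall m, (0 < m < K)%N -> δ <= g m.
Proof.
elim: K => [|K IH] hg; first by exists 1 => // m; rewrite ltn0 andbF.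
have [δ d0 hd] : exists2 δ, 0 < δ & forall m, (0 < m < K)%N -> δ <= g m.
  by apply: IH => m /andP[m0 mK]; apply: hg; rewrite m0 ltnW.
case: (posnP K) => [K0|Kp].
  by exists δ => // m /andP[m0]; rewrite K0 ltnS leqNgt m0.
exists (Num.min δ (g K)).
  by rewrite lt_min d0 hg // Kp ltnSn.
move=> m /andP[m0]; rewrite ltnS leq_eqVlt => /orP[/eqP->|mK].
  by rewrite ge_min lexx orbT.
by rewrite ge_min hd ?m0.
Qed.


Lemma normC_normc (R : rcfType) (z : R[i]) : `|z| = (Normc.normc z)%:C.
Proof. by case: z. Qed.

Lemma root_norm1 (R : rcfType) (w : R[i]) N : N.-primitive_root w -> `|w| = 1.
Proof.
move=> pw; have N0 := prim_order_gt0 pw.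
apply/eqP; rewrite -(pexpr_eq1 N0) // -normrX (prim_expr_order pw) normr1 //.
Qed.

Lemma normc_root (R : rcfType) (w : R[i]) N i : N.-primitive_root w ->
  Normc.normc (w ^+ i) = 1.
Proof.
move=> pw; apply: (@complexI R); rewrite -normC_normc normrX (root_norm1 pw).
by rewrite expr1n.
Qed.

Lemma normcN' (R : rcfType) (z : R[i]) : Normc.normc (- z) = Normc.normc z.
Proof. by apply: (@complexI R); rewrite -!normC_normc normrN. Qed.

Lemma sep_bound (R : rcfType) (w : R[i]) N : N.-primitive_root w ->
  exists2 δ : R, 0 < δ & forall i j : nat, (i %% N)%N != (j %% N)%N ->
    δ <= Normc.normc (w ^+ i - w ^+ j).
Proof.
move=> pw; have N0 := prim_order_gt0 pw.
have H : forall m, (0 < m < N)%N -> 0 < Normc.normc (w ^+ m - 1).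
  move=> m /andP[m0 mN]; rewrite -ltcR -normC_normc normr_gt0 subr_eq0.
  by rewrite -(prim_order_dvd pw); apply/negP => /(dvdn_leq m0); rewrite leqNgt mN.
have [δ d0 hd] := fin_min H.
exists δ => // i j; rewrite -(prim_expr_mod pw i) -(prim_expr_mod pw j).
have : ((i %% N)%N < N)%N by rewrite ltn_pmod.
have : ((j %% N)%N < N)%N by rewrite ltn_pmod.
move: (i %% N)%N (j %% N)%N => s t.
wlog st : s t / (s < t)%N.
  move=> Hw tN sN; rewrite neq_ltn => /orP[st|ts]; first by apply: (Hw s t st tN sN); rewrite neq_ltn st.
  rewrite -normcN' opprB; apply: (Hw t s ts sN tN); by rewrite neq_ltn ts.
move=> tN sN _.
have -> : w ^+ s - w ^+ t = - (w ^+ s * (w ^+ (t - s) - 1)).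
  by rewrite mulrBr mulr1 -exprD (subnKC (ltnW st)) opprB.
rewrite normcN' Normc.normcM (normc_root _ pw) mul1r.
by apply: hd; rewrite subn_gt0 st /= (leq_ltn_trans (leq_subr _ _) tN).
Qed.
Lemma liminf_pos (R : realType) (u : nat -> R) (δ : R) N0 : 0 < δ ->
  (forall n, (N0 <= n)%N -> δ <= u n) -> (0 < limn_einf (fun n => (u n)%:E))%E.
Proof.
move=> d0 hu.
have -> : limn_einf (fun n => (u n)%:E) = ereal_sup (range (einfs (fun n => (u n)%:E))).
  by rewrite limn_einf_lim; apply/cvg_lim => //; exact: cvg_einfs_sup.
apply: (@lt_le_trans _ _ δ%:E); first by rewrite lte_fin.
apply: (@le_trans _ _ (einfs (fun n => (u n)%:E) N0)); last first.
  by apply: ereal_sup_ubound; exists N0.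
apply: le_ereal_inf_tmp => _ [k /= kN <-]; rewrite lee_fin; exact: hu.
Qed.
Lemma prim_root_exists (R : rcfType) n : (0 < n)%N -> exists z : R[i], n.-primitive_root z.
Proof.
pose p : {poly R[i]} := 'X^n - 1; have [r Dp] := closed_field_poly_normal p.
move=> n_gt0; rewrite (monicP _) ?monicXnsubC // scale1r in Dp.
have rn1: all n.-unity_root r by apply/allP=> z; rewrite -root_prod_XsubC -Dp.
have sz_r: (n < (size r).+1)%N.
  by rewrite -(size_prod_XsubC r id) -Dp size_XnsubC.
have [|z] := hasP (has_prim_root n_gt0 rn1 _ sz_r); last by exists z.
by rewrite -separable_prod_XsubC -Dp separable_Xn_sub_1 // pnatr_eq0 -lt0n.
Qed.
End Cplx.

Lemma exists_phi p (c : int) : prime p -> c != 0%R -> exists N phi, phi_spec p N c phi.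
Proof.
move=> pp c0; have [pc|npc] := boolP ((Posz p) %| c)%Z.
  exact: phi_case2.
exact: phi_case1.
Qed.

Lemma pfree_mul p m n : prime p -> (0 < m)%N -> (0 < n)%N ->
  (m * n) %/ p ^ logn p (m * n) = (m %/ p ^ logn p m) * (n %/ p ^ logn p n).
Proof.
move=> pp m0 n0.
case: (pfactor_coprime pp m0) => m' cm hm; case: (pfactor_coprime pp n0) => n' cn hn.
have pg : forall j, (0 < p ^ j)%N by move=> j; rewrite expn_gt0 prime_gt0.
have -> : m %/ p ^ logn p m = m' by rewrite {1}hm mulnK.
have -> : n %/ p ^ logn p n = n' by rewrite {1}hn mulnK.
by rewrite lognM // expnD {1}hm {1}hn mulnACA mulnK // muln_gt0 !pg.
Qed.

Lemma pfree_pos p m : prime p -> (0 < m)%N ->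
  (0 < m %/ p ^ logn p m)%N /\ coprime p (m %/ p ^ logn p m).
Proof.
move=> pp m0; case: (pfactor_coprime pp m0) => m' cm hm.
have -> : m %/ p ^ logn p m = m' by rewrite {1}hm mulnK // expn_gt0 prime_gt0.
split => //; rewrite lt0n; apply/negP => /eqP m'0; move: m0; rewrite hm m'0.
by [].
Qed.

Lemma pfree_eq p k x : prime p -> coprime p x ->
  (x * p ^ k) %/ p ^ logn p (x * p ^ k) = x.
Proof.
move=> pp cx; have x0 : (0 < x)%N.
  by rewrite lt0n; apply/negP => /eqP x0; move: cx; rewrite x0 /coprime gcdn0 => /eqP p1; move: (prime_gt1 pp); rewrite p1.
rewrite lognM //; last by rewrite expn_gt0 prime_gt0.
rewrite (logn_coprime cx) add0n pfactorK //.
by rewrite mulnK // expn_gt0 prime_gt0.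
Qed.

Lemma cm_of_phi (R : realType) p N phi (w : R[i]) : prime p -> (N.-primitive_root w)%R ->
  (forall u v, (0 < u)%N -> (0 < v)%N -> coprime p u -> coprime p v ->
     phi (u * v)%N = phi u + phi v %[mod N]) ->
  unimodular_cm (fun m => (w ^+ phi (m %/ p ^ logn p m)%N)%R).
Proof.
move=> pp pw hmul; split.
- by move=> n _; apply: normc_root pw.
- move=> m n m0 n0; rewrite pfree_mul // -exprD -(prim_expr_mod pw) -[in RHS](prim_expr_mod pw).
  have [m1 cm] := pfree_pos pp m0; have [n1 cn] := pfree_pos pp n0.
  by rewrite hmul.
Qed.

Lemma pos_lin (A n : nat) (E : int) : (0 < A)%N -> (`|E| < n)%N -> (0 < A%:Z * n%:Z + E)%R.
Proof.
move=> A0 En; case: (lerP 0 E) => hE.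
  by have := gez0_abs hE; nia.
by have := ltz0_abs hE; nia.
Qed.

Theorem lemma4p2 (R : realType) (a : nat) (b d : int) (p : nat) :
  (0 < a)%N -> b != 0%R -> d != 0%R -> b != d -> prime p ->
  logn p `|b| = logn p `|d| ->
  (maxn (logn p `|b|) (logn p `|d|) < logn p a)%N ->
  exists f : nat -> R[i], unimodular_cm f /\
    (0 < limn_einf (fun n : nat =>
      (Normc.normc (fZ f (a%:Z * n%:Z + b)%R - fZ f (a%:Z * n%:Z + d)%R))%:E))%E.
Proof.
move=> a0 b0 d0 bd pp hk hlt.
have p0 : (0 < p)%N := prime_gt0 pp.
have b0' : (0 < `|b|)%N by rewrite absz_gt0.
have d0' : (0 < `|d|)%N by rewrite absz_gt0.
set k := logn p `|b| in hk hlt.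
have hka : (k.+1 <= logn p a)%N by rewrite (leq_ltn_trans (leq_maxl _ _) hlt).
set P := p ^ k.
have P0 : (0 < P)%N by rewrite expn_gt0 p0.
have Pb : (P %| `|b|)%N by exact: pfactor_dvdnn.
have Pd : (P %| `|d|)%N by rewrite /P hk pfactor_dvdnn.
have pPa : (p * P %| a)%N by rewrite -expnS pfactor_dvdn.
have npb : ~~ (p * P %| `|b|)%N by rewrite -expnS pfactor_dvdn // ltnn.
have npd : ~~ (p * P %| `|d|)%N by rewrite -expnS pfactor_dvdn // -hk ltnn.
have [B hB] : exists B, b = (B * P%:Z)%R by apply/dvdzP; rewrite dvdzE absz_nat.
have [D hD] : exists D, d = (D * P%:Z)%R by apply/dvdzP; rewrite dvdzE absz_nat.
set A := a %/ P.
have hA : a = (A * P)%N by rewrite divnK // (dvdn_trans _ pPa) // dvdn_mull.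
have pA : (p %| A)%N by rewrite -(dvdn_pmul2r P0) -hA.
have A0 : (0 < A)%N by move: a0; rewrite hA muln_gt0 => /andP[].
have npB : ~~ (p %| `|B|)%N.
  by apply: contra npb => h; rewrite hB abszM absz_nat dvdn_mul.
have npD : ~~ (p %| `|D|)%N.
  by apply: contra npd => h; rewrite hD abszM absz_nat dvdn_mul.
set c := (D - B)%R.
have c0 : c != 0%R by apply: contra bd; rewrite subr_eq0 hB hD => /eqP->.
have [N [phi [N0 [hmul hsep]]]] := exists_phi pp c0.
have [w pw] := prim_root_exists R N0.
exists (fun m => (w ^+ phi (m %/ p ^ logn p m)%N)%R); split; first exact: cm_of_phi pw hmul.
have [δ δ0 hδ] := sep_bound pw.
apply: (@liminf_pos R _ δ (`|B| + `|D| + 1)%N) => // n hn.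
have gen : forall E : int, ~~ (p %| `|E|)%N -> (`|E| < n)%N ->
    exists x : nat, [/\ (0 < x)%N, coprime p x, (x%:Z = A%:Z * n%:Z + E)%R &
       `|(a%:Z * n%:Z + E * P%:Z)%R|%N = (x * P)%N].
  move=> E nE En.
  have pos := pos_lin A0 En.
  exists `|(A%:Z * n%:Z + E)%R|%N; split.
  - by rewrite absz_gt0 gt_eqF.
  - rewrite prime_coprime //; apply: contra nE => hX.
    have h1 : ((Posz p) %| (A%:Z * n%:Z + E)%R)%Z by rewrite dvdzE absz_nat.
    have h2 : ((Posz p) %| (A%:Z * n%:Z)%R)%Z.
      by rewrite dvdzE absz_nat abszM !absz_nat dvdn_mulr.
    have : ((Posz p) %| ((A%:Z * n%:Z + E) - A%:Z * n%:Z)%R)%Z by rewrite rpredB.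
    by rewrite addrC addKr dvdzE absz_nat.
  - by rewrite gtz0_abs.
  - have -> : (a%:Z * n%:Z + E * P%:Z = (A%:Z * n%:Z + E) * P%:Z)%R.
      by rewrite hA PoszM; ring.
    by rewrite abszM absz_nat.
have hBn : (`|B| < n)%N by move: hn; clear; lia.
have hDn : (`|D| < n)%N by move: hn; clear; lia.
have [x [x0 cx hx hxP]] := gen B npB hBn.
have [y [y0 cy hy hyP]] := gen D npD hDn.
rewrite /fZ hB hD hxP hyP !pfree_eq //.
apply: hδ; apply: (hsep x y x0 y0 cx cy).
rewrite hx hy /c; ring.
Qed.
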